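(* Let $U\subset N$ be a coordinate chart with coordinates $(x^1,x^2)$ on a surface with projective structure $[\nabla]$, and on $U\times\mathbb{R}_2$ with fibre coordinates $(\xi_1,\xi_2)$ associate to each torsion-free connection $\nabla\in[\nabla]$ with Christoffel symbols $\Gamma^k_{ij}$ and Schouten tensor $\mathrm{P}_{ij}$ the metric $$g_\nabla=\left(d\xi_i-\left(\Gamma_{ij}^k \xi_k -\xi_i\xi_j-\mathrm{P}_{ji}\right)dx^j\right)\odot dx^i .$$ This metric does not depend on the choice of connection in the projective class: if $\hat\nabla\in[\nabla]$ is related to $\nabla$ by $\hat{\Gamma}^i_{jk}=\Gamma^i_{jk}+\delta^i_j\Upsilon_k+\delta^i_k\Upsilon_j$ for a $1$-form $\Upsilon$, and the fibre coordinates are changed by $\hat\xi_i=\xi_i+\Upsilon_i$, then $g_{\hat\nabla}$ written in the coordinates $(x^i,\hat\xi_i)$ coincides with $g_\nabla$ written in the coordinates $(x^i,\xi_i)$.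
   Context: A projective structure $[\nabla]$ on a surface $N$ is an equivalence class of torsion-free connections on $TN$ with the same unparametrised geodesics; two torsion-free connections are projectively equivalent iff their Christoffel symbols are related by $\hat{\Gamma}^i_{jk}=\Gamma^i_{jk}+\delta^i_j\Upsilon_k+\delta^i_k\Upsilon_j$ for some $1$-form $\Upsilon$. The curvature is defined by $[\nabla_i,\nabla_j]X^k=R_{ij}{}^k{}_lX^l$, and the (not necessarily symmetric) Schouten tensor $\mathrm{P}_{ij}$ is defined by the unique decomposition $R_{ij}{}^k{}_l=\delta_i{}^k\mathrm{P}_{jl}-\delta_j{}^k\mathrm{P}_{il}-2\mathrm{P}_{[ij]}\delta_l{}^k$. Indices run over $1,2$ with summation convention, and $\odot$ denotes the symmetric tensor product. The coordinates $\xi_i$ are affine fibre coordinates of (an affine chart in) the projectivised tractor bundle of $(N,[\nabla])$. *)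

(* Defs.v *)
From HB Require Import structures.
From mathcomp Require Import all_boot all_order all_algebra.
From mathcomp Require Import all_classical all_reals all_analysis.
Set Implicit Arguments. Unset Strict Implicit. Unset Printing Implicit Defensive.
Import Order.TTheory GRing.Theory Num.Theory.
Import numFieldNormedType.Exports.
Local Open Scope ring_scope.
Local Open Scope classical_set_scope.

Definition kdelta (R : realType) (i j : 'I_2) : R := (i == j)%:R.

Definition pd (R : realType) (f : 'rV[R]_2 -> R) (l : 'I_2) (x : 'rV[R]_2) : R :=
  'D_(delta_mx 0 l) f x.

(* Christoffel symbols: Gam k i j = Gamma^k_{ij}, so that
   nabla_i X^k = d_i X^k + Gamma^k_{ij} X^j.
   Curvature [nabla_i, nabla_j] X^k = R_{ij}^k_l X^l :
   R_{ij}^k_l = d_i Gamma^k_{jl} - d_j Gamma^k_{il}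
              + Gamma^k_{im} Gamma^m_{jl} - Gamma^k_{jm} Gamma^m_{il}. *)
Definition riem (R : realType) (Gam : 'I_2 -> 'I_2 -> 'I_2 -> 'rV[R]_2 -> R)
  (x : 'rV[R]_2) (i j k l : 'I_2) : R :=
  pd (Gam k j l) i x - pd (Gam k i l) j x
  + \sum_(m < 2) (Gam k i m x * Gam m j l x - Gam k j m x * Gam m i l x).

Definition is_schouten (R : realType) (U : set 'rV[R]_2)
  (Gam : 'I_2 -> 'I_2 -> 'I_2 -> 'rV[R]_2 -> R) (P : 'I_2 -> 'I_2 -> 'rV[R]_2 -> R) :=
  forall x, U x -> forall i j k l : 'I_2,
    riem Gam x i j k l
    = kdelta R i k * P j l x - kdelta R j k * P i l x - (P i j x - P j i x) * kdelta R l k.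

Definition torsion_free (R : realType) (U : set 'rV[R]_2)
  (Gam : 'I_2 -> 'I_2 -> 'I_2 -> 'rV[R]_2 -> R) :=
  forall x, U x -> forall k i j : 'I_2, Gam k i j x = Gam k j i x.

Definition proj_related (R : realType) (U : set 'rV[R]_2)
  (Gam Gh : 'I_2 -> 'I_2 -> 'I_2 -> 'rV[R]_2 -> R) (Ups : 'I_2 -> 'rV[R]_2 -> R) :=
  forall x, U x -> forall i j k : 'I_2,
    Gh i j k x = Gam i j k x + kdelta R i j * Ups k x + kdelta R i k * Ups j x.

(* Tangent vectors to U x R_2 at a point (x, xi): pairs (v.1, v.2) with
   v.1 0 i = dx^i(v) and v.2 0 i = dxi_i(v). *)
Definition tvec (R : realType) := ('rV[R]_2 * 'rV[R]_2)%type.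

Definition alpha (R : realType) (Gam : 'I_2 -> 'I_2 -> 'I_2 -> 'rV[R]_2 -> R)
  (P : 'I_2 -> 'I_2 -> 'rV[R]_2 -> R) (x xi : 'rV[R]_2) (i : 'I_2) (v : tvec R) : R :=
  v.2 0 i - \sum_(j < 2)
     ((\sum_(k < 2) Gam k i j x * xi 0 k) - xi 0 i * xi 0 j - P j i x) * v.1 0 j.

(* g_nabla = alpha_i (.) dx^i, with  a (.) b = (a (x) b + b (x) a)/2,
   evaluated at the point (x, xi) on the tangent vectors v, w. *)
Definition gmetric (R : realType) (Gam : 'I_2 -> 'I_2 -> 'I_2 -> 'rV[R]_2 -> R)
  (P : 'I_2 -> 'I_2 -> 'rV[R]_2 -> R) (x xi : 'rV[R]_2) (v w : tvec R) : R :=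
  \sum_(i < 2) (alpha Gam P x xi i v * w.1 0 i + alpha Gam P x xi i w * v.1 0 i) / 2.

Definition fibre_shift (R : realType) (Ups : 'I_2 -> 'rV[R]_2 -> R) (x xi : 'rV[R]_2)
  : 'rV[R]_2 := xi + \row_(i < 2) Ups i x.

Definition dfibre_shift (R : realType) (Ups : 'I_2 -> 'rV[R]_2 -> R) (x : 'rV[R]_2)
  (v : tvec R) : tvec R :=
  (v.1, v.2 + \row_(i < 2) \sum_(j < 2) pd (Ups i) j x * v.1 0 j).

(* Main.v *)
Require Import Defs.
From HB Require Import structures.
From mathcomp Require Import all_boot all_order all_algebra.
From mathcomp Require Import all_classical all_reals all_analysis.
From mathcomp Require Import ring lra.
Import Order.TTheory GRing.Theory Num.Theory.
Import numFieldNormedType.Exports.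
Local Open Scope ring_scope.
Local Open Scope classical_set_scope.

Lemma pd_local (R : realType) (U : set 'rV[R]_2) (hU : open U) (f g : 'rV[R]_2 -> R) x l :
  U x -> (forall y, U y -> f y = g y) -> pd f l x = pd g l x.
Proof.
move=> Ux fg; rewrite /pd; apply: near_eq_derive.
have : \forall y \near x, U y by apply: open_nbhs_nbhs; split.
by apply: filterS => y /fg.
Qed.

Lemma pd_lin (R : realType) (f g h : 'rV[R]_2 -> R) a b l x :
  differentiable f x -> differentiable g x -> differentiable h x ->
  pd (fun y => f y + a * g y + b * h y) l x = pd f l x + a * pd g l x + b * pd h l x.
Proof.
move=> df dg dh; rewrite /pd.
have -> : (fun y => f y + a * g y + b * h y) = (f + a \*o g) + b \*o h by [].
rewrite deriveD ?deriveD ?deriveMl //; try apply: diff_derivable => //.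
all: try exact: diff_derivable.
all: try (apply: differentiableD => //); try (apply: differentiableM => //).
Qed.

Notation o0 := (@ord0 1).
Notation o1 := (lift (@ord0 1) (@ord0 0)).

Lemma schouten_sym (R : realType) (U : set 'rV[R]_2)
  (Gam : 'I_2 -> 'I_2 -> 'I_2 -> 'rV[R]_2 -> R) (P : 'I_2 -> 'I_2 -> 'rV[R]_2 -> R) x :
  is_schouten U Gam P -> U x ->
  [/\ P o0 o0 x = riem Gam x o0 o0 o0 o0 + riem Gam x o1 o0 o1 o0,
      P o1 o1 x = riem Gam x o0 o1 o0 o1 + riem Gam x o1 o1 o1 o1 &
      P o1 o0 x = riem Gam x o0 o0 o0 o1 + riem Gam x o1 o0 o1 o1
                + riem Gam x o0 o1 o0 o0 + riem Gam x o1 o1 o1 o0 - P o0 o1 x].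
Proof.
move=> hP Ux.
have := hP x Ux o0 o0 o0 o0; have := hP x Ux o1 o0 o1 o0;
have := hP x Ux o0 o1 o0 o1; have := hP x Ux o1 o1 o1 o1;
have := hP x Ux o0 o0 o0 o1; have := hP x Ux o1 o0 o1 o1;
have := hP x Ux o0 o1 o0 o0; have := hP x Ux o1 o1 o1 o0.
rewrite /kdelta /= => *; split; lra.
Qed.

Theorem theorem5p1 (R : realType) (U : set 'rV[R]_2) (hU : open U)
  (Gam Gh : 'I_2 -> 'I_2 -> 'I_2 -> 'rV[R]_2 -> R)
  (P Ph : 'I_2 -> 'I_2 -> 'rV[R]_2 -> R) (Ups : 'I_2 -> 'rV[R]_2 -> R)
  (dGam : forall k i j x, U x -> differentiable (Gam k i j) x)
  (dGh : forall k i j x, U x -> differentiable (Gh k i j) x)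
  (dUps : forall i x, U x -> differentiable (Ups i) x)
  (tfGam : torsion_free U Gam)
  (rel : proj_related U Gam Gh Ups)
  (hP : is_schouten U Gam P) (hPh : is_schouten U Gh Ph) :
  forall x : 'rV[R]_2, U x -> forall (xi : 'rV[R]_2) (v w : tvec R),
    gmetric Gh Ph x (fibre_shift Ups x xi) (dfibre_shift Ups x v) (dfibre_shift Ups x w)
    = gmetric Gam P x xi v w.
Proof.
move=> x Ux xi v w.
have pdGh a b c l : pd (Gh a b c) l x = pd (Gam a b c) l x
    + kdelta R a b * pd (Ups c) l x + kdelta R a c * pd (Ups b) l x.
  rewrite (@pd_local R U hU _ (fun y => Gam a b c y + kdelta R a b * Ups c y
     + kdelta R a c * Ups b y)) //; last by move=> y Uy; apply: rel.
  by apply: pd_lin; auto.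
have pdtf k l : pd (Gam k o1 o0) l x = pd (Gam k o0 o1) l x.
  by apply: (@pd_local R U hU) => // y Uy; apply: tfGam.
have [P00 P11 P10] := (@schouten_sym R U Gam P x hP Ux).
have [Ph00 Ph11 Ph10] := (@schouten_sym R U Gh Ph x hPh Ux).
rewrite /gmetric /alpha /fibre_shift /dfibre_shift /=.
rewrite !big_ord_recl !big_ord0 !mxE /= !big_ord_recl !big_ord0.
rewrite P00 P11 P10 Ph00 Ph11 Ph10 /riem !big_ord_recl !big_ord0 !pdGh !(rel x Ux).
have k00 : kdelta R o0 o0 = 1 by rewrite /kdelta eqxx.
have k11 : kdelta R o1 o1 = 1 by rewrite /kdelta eqxx.
have k01 : kdelta R o0 o1 = 0 by [].
have k10 : kdelta R o1 o0 = 0 by [].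
rewrite !(tfGam x Ux _ o1 o0) !pdtf k00 k11 k01 k10.
repeat match goal with
  | |- context [pd ?f ?l x] => generalize (pd f l x); intro
  | |- context [Gam ?a ?b ?c x] => generalize (Gam a b c x); intro
  | |- context [Ups ?a x] => generalize (Ups a x); intro
  | |- context [P ?a ?b x] => generalize (P a b x); intro
  | |- context [Ph ?a ?b x] => generalize (Ph a b x); intro
  | |- context [xi 0 ?a] => generalize (xi 0 a); intro
  | |- context [v.1 0 ?a] => generalize (v.1 0 a); intro
  | |- context [v.2 0 ?a] => generalize (v.2 0 a); intro
  | |- context [w.1 0 ?a] => generalize (w.1 0 a); intro
  | |- context [w.2 0 ?a] => generalize (w.2 0 a); intro
  end.
ring.
Qed.
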